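(* Let $$G:=\Big\{\begin{pmatrix}0&1\\1&0\end{pmatrix}\Big\}\cup\operatorname{conv}\Big\{\begin{pmatrix}1&0\\0&1\end{pmatrix},\begin{pmatrix}1&1\\0&0\end{pmatrix}\Big\}\subseteq s(2).$$ Then the semigroup generated by $G$ equals $s(2)$, and $N_G(s(2))=4$; that is, $G^4=s(2)$ while $G^3\subsetneq s(2)$.
   Context: $s(2)$ is the set of $2\times2$ real matrices with non-negative entries whose columns each sum to $1$, a monoid under matrix multiplication. $\operatorname{conv}$ denotes convex hull. For a subset $G$, the semigroup generated by $G$ is the set of all finite products $g_1\cdots g_m$, $m\ge1$, $g_j\in G$; $G^k$ is the set of products of exactly $k$ elements of $G$. For $x$ in the generated semigroup, $N_G(x)$ is the least $m$ such that $x$ is a product of $m$ elements of $G$, and $N_G(S)=\sup_{x\in S}N_G(x)$. *)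

(* Defs.v *)
From HB Require Import structures.
From mathcomp Require Import all_boot all_order all_algebra.
From mathcomp Require Import reals.
Set Implicit Arguments. Unset Strict Implicit. Unset Printing Implicit Defensive.
Import Order.TTheory GRing.Theory Num.Theory.
Local Open Scope ring_scope.

Section Defs.
Variable R : realType.

Definition s2 (A : 'M[R]_2) : Prop :=
  (forall i j, 0 <= A i j) /\ (forall j, \sum_(i < 2) A i j = 1).

Definition swap2 : 'M[R]_2 := \matrix_(i < 2, j < 2) (if i == j then 0 else 1).
Definition E2 : 'M[R]_2 :=
  \matrix_(i < 2, j < 2) (if i == ord0 then 1 else 0).

(* G = {swap} ∪ conv{I, E}; the convex hull of two points is the segment *)
Definition Gset (A : 'M[R]_2) : Prop :=
  A = swap2 \/
  exists t : R, 0 <= t /\ t <= 1 /\ A = (1 - t) *: (1%:M : 'M[R]_2) + t *: E2.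

Fixpoint Gpow (P : 'M[R]_2 -> Prop) (k : nat) (A : 'M[R]_2) : Prop :=
  match k with
  | 0 => A = 1%:M
  | k'.+1 => exists g B, P g /\ Gpow P k' B /\ A = g *m B
  end.

Definition semigroup_gen (P : 'M[R]_2 -> Prop) (A : 'M[R]_2) : Prop :=
  exists m, (0 < m)%N /\ Gpow P m A.

End Defs.

(* Main.v *)
Require Import Defs.
From HB Require Import structures.
From mathcomp Require Import all_boot all_order all_algebra.
From mathcomp Require Import reals ring lra.
Import Order.TTheory GRing.Theory Num.Theory.
Local Open Scope ring_scope.

Section H.
Variable R : realType.

Definition mk (a b c d : R) : 'M[R]_2 :=
  \matrix_(i < 2, j < 2) if val i == 0%N then (if val j == 0%N then a else b)
                         else (if val j == 0%N then c else d).

Lemma mkE (A : 'M[R]_2) :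
  A = mk (A ord0 ord0) (A ord0 ord_max) (A ord_max ord0) (A ord_max ord_max).
Proof.
apply/matrixP => i j; rewrite mxE.
case: i => [[|[|i]] Hi] //; case: j => [[|[|j]] Hj] //=;
  by congr (A _ _); apply: val_inj.
Qed.

Lemma mk_eq a b c d a' b' c' d' :
  mk a b c d = mk a' b' c' d' -> [/\ a = a', b = b', c = c' & d = d'].
Proof.
move=> H.
have E := fun i j => congr1 (fun M : 'M[R]_2 => M i j) H.
move: (E ord0 ord0) (E ord0 ord_max) (E ord_max ord0) (E ord_max ord_max).
by rewrite !mxE /=.
Qed.

Lemma mk_mul a b c d a' b' c' d' :
  mk a b c d *m mk a' b' c' d' =
  mk (a*a'+b*c') (a*b'+b*d') (c*a'+d*c') (c*b'+d*d').
Proof.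
apply/matrixP => i j; rewrite !mxE !big_ord_recr big_ord0 /= !mxE /= add0r.
by case: i => [[|[|i]] Hi] //; case: j => [[|[|j]] Hj].
Qed.

Lemma mk1 : (1%:M : 'M[R]_2) = mk 1 0 0 1.
Proof.
apply/matrixP => i j; rewrite !mxE.
by case: i => [[|[|i]] Hi] //; case: j => [[|[|j]] Hj].
Qed.

Lemma mkS : swap2 R = mk 0 1 1 0.
Proof.
apply/matrixP => i j; rewrite !mxE.
by case: i => [[|[|i]] Hi] //; case: j => [[|[|j]] Hj].
Qed.

Lemma mkT t : (1 - t) *: (1%:M : 'M[R]_2) + t *: E2 R = mk 1 t 0 (1 - t).
Proof.
apply/matrixP => i j; rewrite !mxE.
case: i => [[|[|i]] Hi] //; case: j => [[|[|j]] Hj] //=; rewrite /=; ring.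
Qed.

Lemma GsetE g : Gset g -> g = mk 0 1 1 0 \/ exists t, [/\ 0 <= t, t <= 1 & g = mk 1 t 0 (1 - t)].
Proof.
case=> [->|[t [h0 [h1 ->]]]]; first by left; exact: mkS.
by right; exists t; split => //; exact: mkT.
Qed.

Lemma s2E A : s2 A <-> exists a b : R, [/\ 0 <= a, a <= 1, 0 <= b, b <= 1 & A = mk a b (1 - a) (1 - b)].
Proof.
split.
- case=> Hp Hs; rewrite [A]mkE.
  have s0 := Hs ord0; have s1 := Hs ord_max.
  rewrite !big_ord_recr big_ord0 /= add0r in s0.
  rewrite !big_ord_recr big_ord0 /= add0r in s1.
  have h00 := Hp ord0 ord0; have h01 := Hp ord0 ord_max.
  have h10 := Hp ord_max ord0; have h11 := Hp ord_max ord_max.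
  exists (A ord0 ord0), (A ord0 ord_max).
  have e0 : (widen_ord (leqnSn 1) ord_max) = (ord0 : 'I_2) by apply: val_inj.
  rewrite e0 in s0 s1.
  have -> : A ord_max ord0 = 1 - A ord0 ord0 by lra.
  have -> : A ord_max ord_max = 1 - A ord0 ord_max by lra.
  split => //; lra.
- case=> a [b [h1 h2 h3 h4 ->]]; split.
  + move=> i j; rewrite mxE.
    case: i => [[|[|i]] Hi] //; case: j => [[|[|j]] Hj] //=; lra.
  + move=> j; rewrite !big_ord_recr big_ord0 /= !mxE /= add0r.
    case: j => [[|[|j]] Hj] //=; ring.
Qed.


Lemma s2_mul A B : @s2 R A -> s2 B -> @s2 R (A *m B).
Proof.
move=> /s2E [a [b [h1 h2 h3 h4 ->]]] /s2E [c [d [h5 h6 h7 h8 ->]]].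
rewrite mk_mul; apply/s2E.
exists (a * c + b * (1 - c)), (a * d + b * (1 - d)); split; [nra|nra|nra|nra|congr mk; ring].
Qed.

Lemma Gset_s2 g : @Gset R g -> @s2 R g.
Proof.
case/GsetE => [->|[t [h0 h1 ->]]]; apply/s2E.
- exists 0, 1; split; [lra|lra|lra|lra|congr mk; ring].
- exists 1, t; split; [lra|lra|lra|lra|congr mk; ring].
Qed.

Lemma Gpow_s2 k A : Gpow (@Gset R) k A -> @s2 R A.
Proof.
elim: k A => [|k IH] A /=.
- move=> ->; apply/s2E; exists 1, 0; rewrite mk1; split; [lra|lra|lra|lra|congr mk; ring].
- case=> g [B [Hg [HB ->]]]; apply: s2_mul; [exact: Gset_s2 | exact: IH].
Qed.

Lemma GT t : 0 <= t -> t <= 1 -> @Gset R (mk 1 t 0 (1 - t)).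
Proof. by move=> h0 h1; right; exists t; rewrite mkT. Qed.

Lemma GS : @Gset R (mk 0 1 1 0).
Proof. by left; rewrite mkS. Qed.

Lemma G4 g1 g2 g3 g4 : @Gset R g1 -> @Gset R g2 -> @Gset R g3 -> @Gset R g4 ->
  Gpow (@Gset R) 4 (g1 *m (g2 *m (g3 *m (g4 *m 1%:M)))).
Proof.
move=> H1 H2 H3 H4.
exists g1; eexists; split => //; split; last reflexivity.
exists g2; eexists; split => //; split; last reflexivity.
exists g3; eexists; split => //; split; last reflexivity.
by exists g4, 1%:M.
Qed.

Lemma s2_G4 A : @s2 R A -> Gpow (@Gset R) 4 A.
Proof.
move=> /s2E [a [b [h1 h2 h3 h4 ->]]].
have [hab|hab] := lerP b a.
- have [eb|nb] := eqVneq b 1.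
  + have ea : a = 1 by lra.
    rewrite eb ea.
    have := @G4 _ _ _ _ (@GT 1 ler01 (lexx _)) GS (@GT 0 (lexx _) ler01) GS.
    by rewrite mk1 !mk_mul; congr Gpow; congr mk; ring.
  + have hb : 0 < 1 - b by lra.
    have hb' : 1 - b != 0 by rewrite gt_eqF.
    set t := (1 - a) / (1 - b).
    have t0 : 0 <= t by apply: divr_ge0; lra.
    have t1 : t <= 1 by rewrite /t ler_pdivrMr //; lra.
    have := @G4 _ _ _ _ (@GT b h3 h4) GS (@GT t t0 t1) GS.
    rewrite mk1 !mk_mul; congr Gpow; congr mk; rewrite /t; field; done.
- have ha : 0 < 1 - a by lra.
  have ha' : 1 - a != 0 by rewrite gt_eqF.
  set v := (1 - b) / (1 - a).
  have v0 : 0 <= v by apply: divr_ge0; lra.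
  have v1 : v <= 1 by rewrite /v ler_pdivrMr //; lra.
  have := @G4 _ _ _ _ (@GT a h1 h2) GS (@GT v v0 v1) (@GT 0 (lexx _) ler01).
  rewrite mk1 !mk_mul; congr Gpow; congr mk; rewrite /v; field; done.
Qed.

Definition A0 : 'M[R]_2 := mk (3/4) (1/4) (1/4) (3/4).

Lemma A0_s2 : @s2 R A0.
Proof. apply/s2E; exists (3/4), (1/4); split; [lra|lra|lra|lra|rewrite /A0; congr mk; field]; done. Qed.

Ltac gcase H := case/GsetE: H => [->|[? [? ? ->]]].

Lemma A0_not m : (0 < m < 4)%N -> ~ Gpow (@Gset R) m A0.
Proof.
case: m => [|[|[|[|m]]]] //= _.
- case=> g [B [Hg [-> E]]]; move: E; gcase Hg;
    rewrite mk1 !mk_mul /A0 => /mk_eq [e1 e2 e3 e4]; nra.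
- case=> g [B [Hg [[g2 [B2 [Hg2 [-> ->]]]] E]]]; move: E;
    gcase Hg; gcase Hg2;
    rewrite mk1 !mk_mul /A0 => /mk_eq [e1 e2 e3 e4]; nra.
- case=> g [B [Hg [[g2 [B2 [Hg2 [[g3 [B3 [Hg3 [-> ->]]]] ->]]]] E]]]; move: E;
    gcase Hg; gcase Hg2; gcase Hg3;
    rewrite mk1 !mk_mul /A0 => /mk_eq [e1 e2 e3 e4]; nra.
Qed.

End H.

Theorem proposition2 (R : realType) :
  (forall A : 'M[R]_2, semigroup_gen (@Gset R) A <-> s2 A) /\
  (forall A : 'M[R]_2, s2 A -> exists m, (0 < m <= 4)%N /\ Gpow (@Gset R) m A) /\
  (exists A : 'M[R]_2, s2 A /\ forall m, (0 < m < 4)%N -> ~ Gpow (@Gset R) m A) /\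
  (forall A : 'M[R]_2, Gpow (@Gset R) 4 A <-> s2 A) /\
  (forall A : 'M[R]_2, Gpow (@Gset R) 3 A -> s2 A) /\
  (exists A : 'M[R]_2, s2 A /\ ~ Gpow (@Gset R) 3 A).
Proof.
split; [|split; [|split; [|split; [|split]]]].
- move=> A; split; first by case=> m [_ H]; exact: Gpow_s2 H.
  by move=> H; exists 4%N; split => //; exact: s2_G4.
- by move=> A H; exists 4%N; split => //; exact: s2_G4.
- by exists (A0 R); split; [exact: A0_s2 | exact: A0_not].
- by move=> A; split; [exact: Gpow_s2 | exact: s2_G4].
- by move=> A; exact: Gpow_s2.
- by exists (A0 R); split; [exact: A0_s2 | exact: A0_not].
Qed.
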